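(* There is a constant $c_0>0$ such that for every $N$ for which some pair $(N,M)$ is non-feasible for the family of line graphs of star-forests, the smallest such $M$ satisfies \[M \geq \binom{N-\lceil (-15+\sqrt{153+72N})/2\rceil}{2} > \frac{N^2}{2} - c_0N\sqrt{N}.\]
   Context: All graphs are finite and simple; $L(F)$ is the line graph of $F$. A star-forest is a forest each of whose components is a star $K_{1,n_j}$ ($n_j\ge1$). For integers $N\ge1$ and $0\le M\le\binom N2$, $(N,M)$ is feasible for the family of line graphs of star-forests if there is a star-forest $F$ with $N$ edges such that $L(F)$ has exactly $M$ edges; otherwise it is non-feasible. *)

(* Defs.v *)
From mathcomp Require Import all_boot.
From Stdlib Require Import Reals.

Set Implicit Arguments.
Unset Strict Implicit.
Unset Printing Implicit Defensive.

(* A star-forest: every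
   component is a star K_{1,n} with n >= 1, i.e. it has at least 2 vertices and
   a centre c such that two vertices of the component are adjacent iff exactly
   one of them is c. *)
Definition is_star_forest (T : finType) (e : rel T) : Prop :=
  symmetric e /\ irreflexive e /\
  forall x : T, exists c : T,
    connect e x c /\ (1 < #|[set y | connect e x y]|)%N /\
    forall y z, connect e x y -> connect e x z ->
      (e y z <-> ((y == c) != (z == c))).

Definition edges (T : finType) (e : rel T) : {set {set T}} :=
  [set S | [exists x, exists y, e x y && (S == [set x; y])]].

Definition line_edges (T : finType) (e : rel T) : {set {set {set T}}} :=
  [set P | [exists S1 in edges e, exists S2 in edges e,
     [&& S1 != S2, S1 :&: S2 != set0 & P == [set S1; S2]]]].

Definition feasible (N M : nat) : Prop :=
  exists (T : finType) (e : rel T),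
    is_star_forest e /\ #|edges e| = N /\ #|line_edges e| = M.

(* Ceiling of a real number: ceil x = - floor (- x), floor y = up y - 1. *)
Definition ceilZ (x : R) : Z := (- (up (- x) - 1))%Z.

(* Main.v *)
Require Import Defs.
From mathcomp Require Import all_boot.
From Stdlib Require Import Reals.
From mathcomp Require Import zify.
From Stdlib Require Import Lra Psatz.
From Stdlib Require Znat.
Set Implicit Arguments.
Unset Strict Implicit.
Unset Printing Implicit Defensive.

Lemma connect_map (A B : finType) (f : A -> B) (eA : rel A) (eB : rel B) :
  (forall a b, eA a b -> eB (f a) (f b)) ->
  forall a b, connect eA a b -> connect eB (f a) (f b).
Proof.
move=> H a b /connectP[p pth ->]; apply/connectP; exists (map f p); last by rewrite last_map.
by rewrite path_map; apply: sub_path pth => x y; exact: H.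
Qed.

Lemma edge_nonempty (T : finType) (e : rel T) S : S \in edges e -> exists x, x \in S.
Proof.
rewrite inE => /existsP[x /existsP[y /andP[_ /eqP->]]]; exists x; rewrite !inE eqxx.
done.
Qed.

Section Side.
Variables (A T : finType) (eA : rel A) (eT : rel T) (h : A -> T).
Hypothesis hinj : injective h.
Hypothesis Hh : forall a b, eT (h a) (h b) = eA a b.
Hypothesis Hout : forall a y, eT (h a) y -> exists b, y = h b.
Hypothesis Hout2 : forall a y, eT y (h a) -> exists b, y = h b.

Definition fh (S : {set A}) : {set T} := [set h x | x in S].

Lemma side_connect_inv a y : connect eT (h a) y -> exists2 b, y = h b & connect eA a b.
Proof.
move/connectP=> [p]; elim: p a => [|z p IH] a /=.
  by move=> _ ->; exists a => //; exact: connect0.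
case/andP=> ez pth yl; have [b zb] := Hout ez; subst z.
have [b' -> cb] := IH b pth yl; exists b' => //.
by apply: connect_trans cb; apply: connect1; rewrite -Hh.
Qed.

Lemma side_comp a : [set y | connect eT (h a) y] = fh [set b | connect eA a b].
Proof.
apply/setP => y; rewrite inE; apply/idP/idP.
- by case/side_connect_inv => b -> cb; apply: imset_f; rewrite inE.
- case/imsetP => b; rewrite inE => cb ->; apply: connect_map cb => x z; by rewrite Hh.
Qed.

Lemma side_edge S : S \in edges eA -> fh S \in edges eT.
Proof.
rewrite inE => /existsP[x /existsP[y /andP[exy /eqP->]]].
rewrite inE; apply/existsP; exists (h x); apply/existsP; exists (h y).
by rewrite Hh exy /fh imsetU1 imset_set1 eqxx.
Qed.

Lemma side_edge_inv a y : eT (h a) y -> exists2 S, S \in edges eA & [set h a; y] = fh S.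
Proof.
move=> ey; have [b yb] := Hout ey; subst y; exists [set a; b].
  rewrite inE; apply/existsP; exists a; apply/existsP; exists b; rewrite -Hh ey eqxx //.
by rewrite /fh imsetU1 imset_set1.
Qed.

Lemma side_edge_inv2 a y : eT y (h a) -> exists2 S, S \in edges eA & [set y; h a] = fh S.
Proof.
move=> ey; have [b yb] := Hout2 ey; subst y; exists [set b; a].
  rewrite inE; apply/existsP; exists b; apply/existsP; exists a; rewrite -Hh ey eqxx //.
by rewrite /fh imsetU1 imset_set1.
Qed.

Lemma fh_inj : injective fh.
Proof. exact: imset_inj. Qed.

Lemma fh_meet S1 S2 : (fh S1 :&: fh S2 != set0) = (S1 :&: S2 != set0).
Proof.
rewrite /fh -imsetI; last by move=> x y _ _; apply: hinj.
by rewrite -!cards_eq0 card_imset.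
Qed.

Lemma side_line P : P \in line_edges eA -> [set fh x | x in P] \in line_edges eT.
Proof.
rewrite inE => /existsP[S1 /andP[S1e /existsP[S2 /andP[S2e /and3P[ne me /eqP->]]]]].
rewrite inE; apply/existsP; exists (fh S1); rewrite side_edge //.
apply/existsP; exists (fh S2); rewrite side_edge // (inj_eq fh_inj) ne fh_meet me.
by rewrite imsetU1 imset_set1 eqxx.
Qed.

Lemma side_line_inv S1 S2 : S1 \in edges eA -> S2 \in edges eA -> S1 != S2 ->
  S1 :&: S2 != set0 -> exists2 P, P \in line_edges eA & [set fh S1; fh S2] = [set fh x | x in P].
Proof.
move=> S1e S2e ne me; exists [set S1; S2]; last by rewrite imsetU1 imset_set1.
rewrite inE; apply/existsP; exists S1; rewrite S1e; apply/existsP; exists S2.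
by rewrite S2e ne me eqxx.
Qed.
End Side.

Section Union.
Variables (T1 T2 : finType) (e1 : rel T1) (e2 : rel T2).
Definition urel : rel (T1 + T2) := fun x y =>
  match x, y with inl a, inl b => e1 a b | inr a, inr b => e2 a b | _, _ => false end.

Lemma Hl_h a b : urel (inl a) (inl b) = e1 a b. Proof. by []. Qed.
Lemma Hr_h a b : urel (inr a) (inr b) = e2 a b. Proof. by []. Qed.
Lemma Hl_out a y : urel (inl a) y -> exists b, y = inl b.
Proof. by case: y => // b; exists b. Qed.
Lemma Hr_out a y : urel (inr a) y -> exists b, y = inr b.
Proof. by case: y => // b; exists b. Qed.
Lemma Hl_out2 a y : urel y (inl a) -> exists b, y = inl b.
Proof. by case: y => // b; exists b. Qed.
Lemma Hr_out2 a y : urel y (inr a) -> exists b, y = inr b.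
Proof. by case: y => // b; exists b. Qed.

Notation fl := (fh (@inl T1 T2)).
Notation fr := (fh (@inr T1 T2)).

Lemma flr_disj (S1 : {set T1}) (S2 : {set T2}) : fl S1 :&: fr S2 = set0.
Proof.
apply/setP => x; rewrite !inE; apply/negP => /andP[/imsetP[a _ ->] /imsetP[b _]] //.
Qed.

Lemma union_edges : edges urel =
  [set fl S | S in edges e1] :|: [set fr S | S in edges e2].
Proof.
apply/setP => S; apply/idP/idP.
- rewrite {1}/edges inE => /existsP[x /existsP[y /andP[exy /eqP->]]].
  apply/setUP; case: x exy => a exy.
    have [S' S'e ->] := side_edge_inv Hl_h Hl_out exy.
    by left; apply: imset_f.
  have [S' S'e ->] := side_edge_inv Hr_h Hr_out exy.
  by right; apply: imset_f.
- by case/setUP => /imsetP[S' S'e ->]; [apply: (side_edge Hl_h) | apply: (side_edge Hr_h)].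
Qed.

Lemma card_union_edges : #|edges urel| = #|edges e1| + #|edges e2|.
Proof.
rewrite union_edges cardsU !card_imset; try exact: (fh_inj inl_inj); try exact: (fh_inj inr_inj).
suff -> : [set fl S | S in edges e1] :&: [set fr S | S in edges e2] = set0.
  by rewrite cards0 subn0.
apply/setP => S; rewrite !inE; apply/negP => /andP[/imsetP[S1 S1e ->] /imsetP[S2 S2e]].
have [a aS1] := edge_nonempty S1e => /setP/(_ (inl a)).
by rewrite /fh (imset_f inl aS1) => /esym/imsetP[b _].
Qed.

Lemma union_line : line_edges urel =
  [set [set fl x | x in P] | P : {set {set T1}} in line_edges e1] :|: [set [set fr x | x in P] | P : {set {set T2}} in line_edges e2].
Proof.
apply/setP => P; apply/idP/idP.
- rewrite {1}/line_edges inE.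
  case/existsP => S1 /andP[S1e /existsP[S2 /andP[S2e /and3P[ne me /eqP->]]]].
  move: S1e S2e ne me; rewrite union_edges.
  case/setUP => /imsetP[A Ae ->]; case/setUP => /imsetP[B Be ->] => ne me.
  + apply/setUP; left; rewrite (inj_eq (fh_inj inl_inj)) in ne; rewrite fh_meet in me; last exact: inl_inj.
    have [P' P'e ->] := side_line_inv (@inl T1 T2) Ae Be ne me; exact: imset_f.
  + by rewrite flr_disj eqxx in me.
  + by rewrite setIC flr_disj eqxx in me.
  + apply/setUP; right; rewrite (inj_eq (fh_inj inr_inj)) in ne; rewrite fh_meet in me; last exact: inr_inj.
    have [P' P'e ->] := side_line_inv (@inr T1 T2) Ae Be ne me; exact: imset_f.
- by case/setUP => /imsetP[P' P'e ->]; [apply: (side_line inl_inj Hl_h) | apply: (side_line inr_inj Hr_h)].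
Qed.

Lemma line_nonempty (T : finType) (e : rel T) P : P \in line_edges e ->
  exists2 S, S \in P & S \in edges e.
Proof.
rewrite inE => /existsP[S1 /andP[S1e /existsP[S2 /andP[S2e /and3P[ne me /eqP->]]]]].
by exists S1; rewrite // !inE eqxx.
Qed.

Lemma card_union_line : #|line_edges urel| = #|line_edges e1| + #|line_edges e2|.
Proof.
rewrite union_line cardsU !card_imset; try exact: (imset_inj (fh_inj inl_inj));
  try exact: (imset_inj (fh_inj inr_inj)).
suff -> : [set [set fl x | x in P] | P : {set {set T1}} in line_edges e1] :&:
          [set [set fr x | x in P] | P : {set {set T2}} in line_edges e2] = set0.
  by rewrite cards0 subn0.
apply/setP => P; rewrite !inE; apply/negP => /andP[/imsetP[P1 P1e ->] /imsetP[P2 P2e]].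
have [S1 S1P S1e] := line_nonempty P1e.
have [a aS1] := edge_nonempty S1e => /setP/(_ (fl S1)).
rewrite (imset_f _ S1P) => /esym/imsetP[S2 _] /setP/(_ (inl a)).
by rewrite /fh (imset_f inl aS1) => /esym/imsetP[b _].
Qed.

Lemma union_sf : is_star_forest e1 -> is_star_forest e2 -> is_star_forest urel.
Proof.
move=> [s1 [i1 h1]] [s2 [i2 h2]]; split; last split.
- by case=> a; case=> b //=; rewrite /urel ?s1 ?s2.
- by case=> a /=; rewrite /urel ?i1 ?i2.
case=> a.
- have [c [cac [card H]]] := h1 a; exists (inl c); split.
    by apply: connect_map cac => x y.
  rewrite (side_comp Hl_h Hl_out) /fh (card_imset _ (@inl_inj _ _)); split => // y z.
  case/(side_connect_inv Hl_h Hl_out) => b -> cb; case/(side_connect_inv Hl_h Hl_out) => b' -> cb'.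
  by rewrite /= (H _ _ cb cb').
- have [c [cac [card H]]] := h2 a; exists (inr c); split.
    by apply: connect_map cac => x y.
  rewrite (side_comp Hr_h Hr_out) /fh (card_imset _ (@inr_inj _ _)); split => // y z.
  case/(side_connect_inv Hr_h Hr_out) => b -> cb; case/(side_connect_inv Hr_h Hr_out) => b' -> cb'.
  by rewrite /= (H _ _ cb cb').
Qed.
End Union.

Lemma feasible_union N1 M1 N2 M2 : feasible N1 M1 -> feasible N2 M2 -> feasible (N1 + N2) (M1 + M2).
Proof.
move=> [T1 [e1 [sf1 [E1 L1]]]] [T2 [e2 [sf2 [E2 L2]]]].
exists (T1 + T2)%type, (urel e1 e2); split; first exact: union_sf.
by rewrite card_union_edges card_union_line E1 E2 L1 L2.
Qed.

Lemma feasible00 : feasible 0 0.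
Proof.
exists void, (fun _ _ => false); split; last split.
- by split; [|split] => // -[].
- apply/eqP; rewrite cards_eq0; apply/eqP/setP => S; rewrite !inE.
  by apply/existsP => -[[]].
- apply/eqP; rewrite cards_eq0; apply/eqP/setP => S; rewrite !inE.
  apply/existsP => -[S1]; rewrite inE => /andP[/existsP[[]]].
Qed.

Section Star.
Variable n : nat.
Definition srel : rel 'I_n.+1 := fun x y => (x == ord0) != (y == ord0).

Lemma star_edge_mem S : S \in edges srel -> ord0 \in S.
Proof.
rewrite inE => /existsP[x /existsP[y /andP[exy /eqP->]]].
rewrite !inE ![ord0 == _]eq_sym; move: exy; rewrite /srel.
by case: (x == ord0); case: (y == ord0); rewrite ?orbT.
Qed.

Lemma star_edges : edges srel = [set [set ord0; i] | i in [set~ ord0]].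
Proof.
apply/setP => S; apply/idP/idP.
- rewrite inE => /existsP[x /existsP[y /andP[exy /eqP->]]].
  move: exy; rewrite /srel.
  case: (x =P ord0) => [->|/eqP xn0]; case: (y =P ord0) => [->|/eqP yn0] //= _.
    by apply/imsetP; exists y; rewrite ?inE.
  by apply/imsetP; exists x; rewrite ?inE // setUC.
- case/imsetP => i; rewrite !inE => in0 ->.
  rewrite /edges ?inE; apply/existsP; exists ord0; apply/existsP; exists i.
  by rewrite /srel eqxx in0 eqxx.
Qed.

Lemma card_star_edges : #|edges srel| = n.
Proof.
rewrite star_edges card_in_imset ?cardsC1 ?card_ord //.
move=> i j; rewrite !inE => in0 jn0 /setP/(_ i).
rewrite !inE eqxx orbT (negbTE in0) /= => /esym/eqP; done.
Qed.

Lemma star_line : line_edges srel = [set P : {set {set (ordinal n.+1)}} | P \subset edges srel & #|P| == 2].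
Proof.
apply/setP => P; rewrite !inE; apply/idP/idP.
- case/existsP => S1 /andP[S1e /existsP[S2 /andP[S2e /and3P[ne _ /eqP->]]]].
  rewrite cards2 ne andbT; apply/subsetP => S; rewrite in_set2 => /orP[] /eqP-> //.
- case/andP => sub /cards2P[S1 [S2 [ne Pe]]].
  have S1e : S1 \in edges srel by apply: (subsetP sub); rewrite Pe !inE eqxx.
  have S2e : S2 \in edges srel by apply: (subsetP sub); rewrite Pe !inE eqxx orbT.
  apply/existsP; exists S1; rewrite S1e; apply/existsP; exists S2; rewrite S2e ne Pe eqxx andbT /=.
  apply/set0Pn; exists ord0; rewrite inE !star_edge_mem //.
Qed.

Lemma card_star_line : #|line_edges srel| = 'C(n, 2).
Proof. by rewrite star_line cards_draws card_star_edges. Qed.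

Lemma star_sf : (0 < n)%N -> is_star_forest srel.
Proof.
move=> n0; split; last split.
- by move=> x y; rewrite /srel eq_sym.
- by move=> x; rewrite /srel eqxx.
have c0 : forall x, connect srel x ord0.
  move=> x; case: (x =P ord0) => [->|/eqP xn]; first exact: connect0.
  by apply: connect1; rewrite /srel (negbTE xn) eqxx.
move=> x; exists ord0; split; first exact: c0.
split; last by move=> y z _ _; split.
have -> : [set y | connect srel x y] = setT.
  apply/setP => y; rewrite !inE; apply: connect_trans (c0 x) _.
  case: (y =P ord0) => [->|/eqP yn]; first exact: connect0.
  by apply: connect1; rewrite /srel (negbTE yn) eqxx.
by rewrite cardsT card_ord.
Qed.
End Star.

Lemma feasible_star n : (0 < n)%N -> feasible n 'C(n, 2).
Proof.
move=> n0; exists ('I_n.+1), (@srel n).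
by rewrite card_star_edges card_star_line; split => //; apply: star_sf.
Qed.

Definition C2 n := 'C(n, 2).

Definition rep (B r : nat) := exists s : seq nat,
  [/\ all (fun n => 0 < n) s, sumn s <= B & sumn (map C2 s) = r].

Lemma bin2_2 n : 2 * 'C(n, 2) = n * (n - 1).
Proof.
elim: n => // n IH; rewrite binS bin1 mulnDr IH; nia.
Qed.

Lemma tri_exists r : exists b, [/\ 0 < b, 'C(b, 2) <= r & r < 'C(b, 2) + b].
Proof.
elim: r => [|r [b [b0 lo hi]]]; first by exists 1.
case: (ltnP r.+1 ('C(b,2) + b)) => h; first by exists b; split => //; lia.
exists b.+1; rewrite binS bin1; split => //; lia.
Qed.

Definition big r := foldl (fun acc b => if 'C(b,2) <= r then b else acc) 0 (iota 0 r.+2).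
Fixpoint glist f r := if f is f'.+1 then (if r == 0 then [::] else big r :: glist f' (r - 'C(big r,2))) else [::].

Lemma small_check : all (fun B => all (fun r => (18*r <= (B-7)*(B+2)) ==>
   let s := glist 30 r in [&& all (fun n => 0<n) s, (sumn s <= B) & (sumn (map C2 s) == r)]) (iota 0 30)) (iota 0 24).
Proof. by vm_compute. Qed.

Lemma S_small B r : B < 24 -> 18*r <= (B-7)*(B+2) -> rep B r.
Proof.
move=> hB hr; have r30 : r < 30.
  have : (B-7)*(B+2) <= 16*25 by apply: leq_mul; lia.
  lia.
have hB' : B \in iota 0 24 by rewrite mem_iota; lia.
have hr' : r \in iota 0 30 by rewrite mem_iota; lia.
have := small_check; move/allP/(_ B hB')/allP/(_ r hr'); rewrite hr implyTb.
move: (glist 30 r) => s /and3P[a b /eqP c]; exists s; split; [exact: a | exact: b | exact: c].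
Qed.

Lemma S_all B : forall r, 18*r <= (B-7)*(B+2) -> rep B r.
Proof.
elim/ltn_ind: B => B IH r hr.
case: (ltnP B 24) => hB; first exact: S_small.
case: (posnP r) => [->|r0]; first by exists [::].
have [b [b0 lo hi]] := tri_exists r.
have h2 := bin2_2 b.
have b2 : 2 <= b.
  case: b b0 lo hi h2 => // -[|b] //= _; rewrite bin2 /=; lia.
have b3 : 3 * (b - 1) < B.
  rewrite ltnNge; apply/negP => hc.
  have : B * B <= 9 * ((b - 1) * (b - 1)) by nia.
  nia.
set x := B - b.
have hx : 2 * B <= 3 * x + 2 by lia.
have hr' : 18 * (r - 'C(b,2)) <= (x - 7) * (x + 2).
  have : 18 * (r - 'C(b,2)) <= 9 * x by lia.
  have : 16 <= x by lia.
  nia.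
have [s [sp ss sc]] := IH x (ltac:(lia)) _ hr'.
exists (b :: s); split => /=.
- by rewrite sp andbT.
- lia.
- rewrite sc /C2; lia.
Qed.

Lemma all_rep N k M : 18*N <= k*k+15*k+18 -> M < 'C(N-k,2) -> rep N M.
Proof.
move=> hN hM.
have [a [a0 lo hi]] := tri_exists M.
have aN : a < N - k.
  rewrite ltnNge; apply/negP => h; have := leq_bin2l 2 h; lia.
case: (posnP (M - 'C(a,2))) => r0.
  exists [:: a]; split => /=; rewrite ?a0 //; first lia.
  rewrite /C2; lia.
have h2 := bin2_2 a.
have hr : 18 * (M - 'C(a,2)) <= (N - a - 7) * (N - a + 2).
  have : 18 * (M - 'C(a,2)) <= 18 * (N - k - 2) by lia.
  have : 7 <= N - a by nia.
  nia.
have [s [sp ss sc]] := S_all hr.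
exists (a :: s); split => /=.
- by rewrite sp andbT.
- lia.
- rewrite sc /C2; lia.
Qed.

Lemma ceil_props x : (0 <= x)%R ->
  (x <= INR (Z.to_nat (ceilZ x)) < x + 1)%R.
Proof.
move=> x0; have [h1 h2] := archimed (- x).
have hc : IZR (ceilZ x) = (1 - IZR (up (- x)))%R.
  by rewrite /ceilZ opp_IZR minus_IZR; lra.
have z0 : (0 <= ceilZ x)%Z.
  have : (-1 < IZR (ceilZ x))%R by lra.
  move/(lt_IZR (-1)); lia.
rewrite INR_IZR_INZ Znat.Z2Nat.id //; lra.
Qed.

Lemma cm_gen m : (2 * INR 'C(m, 2) = INR m * (INR m - 1))%R.
Proof.
have := bin2_2 m; case: m => [|m']; first by rewrite /= ; lra.
move=> h; rewrite -[(2 * _)%R]/(INR 2 * _)%R -mult_INR multE h -multE mult_INR.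
rewrite -minusE minus_INR; last lia.
simpl (INR 1); lra.
Qed.

Lemma real_part (N : nat) : (1 <= N)%N ->
  let k := Z.to_nat (ceilZ ((-15 + sqrt (153 + 72 * INR N)) / 2)) in
  (18 * N <= k * k + 15 * k + 18)%N /\
  (INR 'C(N - k, 2) > INR N ^ 2 / 2 - 20 * INR N * sqrt (INR N))%R.
Proof.
move=> N1 k.
have NR : (1 <= INR N)%R by apply: (le_INR 1); apply/leP.
set q := sqrt (153 + 72 * INR N).
have q15 : (15 <= q)%R.
  rewrite -[15%R]sqrt_square; last lra.
  apply: sqrt_le_1_alt; lra.
have qq : (q * q = 153 + 72 * INR N)%R by apply: sqrt_sqrt; lra.
have [kl ku] := @ceil_props ((-15 + q) / 2)%R ltac:(lra).
rewrite -/k in kl ku.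
split.
  apply/leP; apply: INR_le.
  rewrite -!multE -!plusE !plus_INR !mult_INR.
  replace (INR 18) with 18%R by (simpl; lra).
  replace (INR 15) with 15%R by (simpl; lra).
  have k0 : (0 <= INR k)%R by apply: pos_INR.
  nra.
set s := sqrt (INR N).
have ss : (s * s = INR N)%R by apply: sqrt_sqrt; lra.
have s1 : (1 <= s)%R.
  rewrite /s -sqrt_1; apply: sqrt_le_1_alt; lra.
have qs : (q <= 15 * s)%R.
  rewrite -(sqrt_square (15 * s)); last lra.
  apply: sqrt_le_1_alt; nra.
set m := (N - k)%N.
have mk : (INR N <= INR m + INR k)%R.
  rewrite -plus_INR; apply: le_INR; apply/leP; rewrite plusE /m; lia.
have cm := cm_gen m.
have c0 : (0 <= INR 'C(m, 2))%R by apply: pos_INR.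
have m0 : (0 <= INR m)%R by apply: pos_INR.
case: (Rle_lt_dec (INR N) (15 / 2 * s)) => hw.
  have : (INR N ^ 2 / 2 - 20 * INR N * s < 0)%R by nra.
  lra.
have zw : (INR m >= INR N - 15 / 2 * s + 6)%R by lra.
nra.
Qed.

Lemma feasible_list s : all (fun n => 0 < n) s ->
  feasible (sumn s) (sumn (map C2 s)).
Proof.
elim: s => [|n s IH]; first by move=> _; change (feasible 0 0); exact: feasible00.
rewrite /=.
case/andP => n0 /IH h; exact: feasible_union (feasible_star n0) h.
Qed.

Lemma rep_feasible N M : rep N M -> feasible N M.
Proof.
case=> s [sp ss sc].
have := @feasible_list (s ++ nseq (N - sumn s) 1).
rewrite all_cat sp /= all_nseq /= orbT => /(_ isT).
rewrite sumn_cat sumn_nseq map_cat sumn_cat map_nseq sumn_nseq sc.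
have -> : sumn s + 1 * (N - sumn s) = N by lia.
by have -> : C2 1 = 0 by []; rewrite mul0n addn0.
Qed.

Theorem mainTheorem8 :
  exists c0 : R, (0 < c0)%R /\
  forall N M0 : nat,
    (1 <= N)%N -> (M0 <= 'C(N, 2))%N -> ~ feasible N M0 ->
    (forall M : nat, (M < M0)%N -> feasible N M) ->
    let k := Z.to_nat (ceilZ ((-15 + sqrt (153 + 72 * INR N)) / 2)) in
    ('C(N - k, 2) <= M0)%N /\
    (INR 'C(N - k, 2) > INR N ^ 2 / 2 - c0 * INR N * sqrt (INR N))%R.
Proof.
exists 20%R; split; first lra.
move=> N M0 N1 _ nf _ k.
have [hk hr] := real_part N1.
split => //.
rewrite leqNgt; apply/negP => hM; apply: nf; apply: rep_feasible.
exact: all_rep hk hM.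
Qed.
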